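(* Fix real numbers $L,\ell_1,\ell_2>0$. There is a unique set map $B_L^{\ell_1,\ell_2}:\mathcal{G}(L,\ell_1+\ell_2)\to\mathcal{G}(L,\ell_2+\ell_1)$ such that $B_L^{\ell_1,\ell_2}(\phi_1\otimes\phi_2)=\phi_2\otimes\phi_1$ for all $\ell'_1,\ell'_2>0$ with $\ell'_1+\ell'_2=L$ and all $\phi_1\in\mathcal{G}(\ell'_1,\ell_1)$, $\phi_2\in\mathcal{G}(\ell'_2,\ell_2)$. Moreover, $B_L^{\ell_1,\ell_2}$ is a homeomorphism.
   Context: $\mathcal{G}$ is the category whose objects are the real numbers $\ell>0$, with $\mathcal{G}(\ell_1,\ell_2)$ the set of nondecreasing homeomorphisms $[0,\ell_1]\to[0,\ell_2]$ (necessarily sending $0\mapsto0$, $\ell_1\mapsto\ell_2$), equipped with the compact-open topology, and composition given by composition of maps. For $\phi_i:[0,\ell_i]\to[0,\ell'_i]$ ($i=1,2$), $\phi_1\otimes\phi_2:[0,\ell_1+\ell_2]\to[0,\ell'_1+\ell'_2]$ is defined by $(\phi_1\otimes\phi_2)(t)=\phi_1(t)$ for $0\le t\le\ell_1$ and $\phi_2(t-\ell_1)+\ell'_1$ for $\ell_1\le t\le\ell_1+\ell_2$. Note $\ell_1+\ell_2=\ell_2+\ell_1$ as objects, so $B_L^{\ell_1,\ell_2}$ is a self-map of the space $\mathcal{G}(L,\ell_1+\ell_2)$. *)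

(* Defs.v *)
From Stdlib Require Import Reals Lra.
Open Scope R_scope.

Definition in0 (a t : R) : Prop := 0 <= t <= a.

Definition cont_on (a : R) (f : R -> R) : Prop :=
  forall x, in0 a x -> forall eps, 0 < eps ->
    exists delta, 0 < delta /\
      forall y, in0 a y -> Rabs (y - x) < delta -> Rabs (f y - f x) < eps.

Definition ndhomeo (a b : R) (f : R -> R) : Prop :=
  (forall t, in0 a t -> in0 b (f t)) /\
  (forall s t, in0 a s -> in0 a t -> s <= t -> f s <= f t) /\
  cont_on a f /\
  exists g : R -> R,
    (forall s, in0 b s -> in0 a (g s)) /\
    (forall t, in0 a t -> g (f t) = t) /\
    (forall s, in0 b s -> f (g s) = s) /\
    cont_on b g.

(* An element is represented by a function
   R -> R whose restriction to [0,a] is the homeomorphism; outside [0,a]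
   it is normalized to be 0 on t < 0 and b on t > a, so that elements of
   G(a,b) correspond bijectively to maps [0,a] -> [0,b]. *)
Definition G (a b : R) (f : R -> R) : Prop :=
  ndhomeo a b f /\ (forall t, t < 0 -> f t = 0) /\ (forall t, a < t -> f t = b).

Definition tensor (a1 b1 : R) (phi1 phi2 : R -> R) : R -> R :=
  fun t => if Rle_dec t a1 then phi1 t else phi2 (t - a1) + b1.

(* Compact-open topology on G(a,b) = topology of uniform convergence on [0,a].
   Continuity of a self-map F of G(a,b) w.r.t. this topology. *)
Definition sup_continuous (a b : R) (F : (R -> R) -> (R -> R)) : Prop :=
  forall f, G a b f -> forall eps, 0 < eps ->
    exists delta, 0 < delta /\
      forall g, G a b g ->
        (forall t, in0 a t -> Rabs (g t - f t) <= delta) ->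
        forall t, in0 a t -> Rabs (F g t - F f t) <= eps.

Definition braid_prop (L l1 l2 : R) (B : (R -> R) -> (R -> R)) : Prop :=
  (forall f, G L (l1 + l2) f -> G L (l2 + l1) (B f)) /\
  forall l1' l2', 0 < l1' -> 0 < l2' -> l1' + l2' = L ->
    forall phi1 phi2, G l1' l1 phi1 -> G l2' l2 phi2 ->
      B (tensor l1' l1 phi1 phi2) = tensor l2' l2 phi2 phi1.

(* Main.v *)
Require Import Defs.
From Stdlib Require Import Reals.
From Stdlib Require Import Lra ClassicalEpsilon FunctionalExtensionality.
Open Scope R_scope.

Definition ndh' (a b : R) (f : R -> R) : Prop :=
  (forall t, in0 a t -> in0 b (f t)) /\
  (forall s t, in0 a s -> in0 a t -> s <= t -> f s <= f t) /\
  exists g : R -> R,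
    (forall s, in0 b s -> in0 a (g s)) /\
    (forall t, in0 a t -> g (f t) = t) /\
    (forall s, in0 b s -> f (g s) = s).

Lemma mono_surj_cont a b f :
  (forall t, in0 a t -> in0 b (f t)) ->
  (forall s t, in0 a s -> in0 a t -> s <= t -> f s <= f t) ->
  (forall y, in0 b y -> exists t, in0 a t /\ f t = y) ->
  cont_on a f.
Proof.
  intros Hr Hm Hs x Hx eps He.
  assert (HR : exists d, 0 < d /\ forall y, in0 a y -> x <= y < x + d -> f y < f x + eps).
  { destruct (Rlt_dec (f x + eps/2) b) as [Hlt|Hge].
    - destruct (Hs (f x + eps/2)) as [tv [Htv Hfv]].
      { pose proof (Hr x Hx); unfold in0 in *; lra. }
      assert (x < tv).
      { destruct (Rlt_dec x tv); auto. assert (tv <= x) by lra.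
        pose proof (Hm tv x Htv Hx H). lra. }
      exists (tv - x); split; [lra|].
      intros y Hy Hxy. pose proof (Hm y tv Hy Htv ltac:(lra)). lra.
    - exists 1; split; [lra|]. intros y Hy _. pose proof (Hr y Hy); unfold in0 in *; lra. }
  assert (HL : exists d, 0 < d /\ forall y, in0 a y -> x - d < y <= x -> f x - eps < f y).
  { destruct (Rlt_dec 0 (f x - eps/2)) as [Hlt|Hge].
    - destruct (Hs (f x - eps/2)) as [tv [Htv Hfv]].
      { pose proof (Hr x Hx); unfold in0 in *; lra. }
      assert (tv < x).
      { destruct (Rlt_dec tv x); auto. assert (x <= tv) by lra.
        pose proof (Hm x tv Hx Htv H). lra. }
      exists (x - tv); split; [lra|].
      intros y Hy Hxy. pose proof (Hm tv y Htv Hy ltac:(lra)). lra.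
    - exists 1; split; [lra|]. intros y Hy _. pose proof (Hr y Hy); unfold in0 in *; lra. }
  destruct HR as [d1 [Hd1 HR]]. destruct HL as [d2 [Hd2 HL]].
  exists (Rmin d1 d2). split. { apply Rmin_glb_lt; auto. }
  intros y Hy Hyx. pose proof (Rmin_l d1 d2). pose proof (Rmin_r d1 d2).
  apply Rabs_def1.
  - destruct (Rle_dec x y).
    + assert (Rabs (y - x) = y - x) by (apply Rabs_right; lra).
      pose proof (HR y Hy ltac:(lra)). lra.
    + pose proof (Hm y x Hy Hx ltac:(lra)). lra.
  - destruct (Rle_dec y x).
    + assert (Rabs (y - x) = -(y - x)) by (apply Rabs_left1; lra).
      pose proof (HL y Hy ltac:(lra)). lra.
    + pose proof (Hm x y Hx Hy ltac:(lra)). lra.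
Qed.

Lemma ndh'_ndh a b f : ndh' a b f -> ndhomeo a b f.
Proof.
  intros [Hr [Hm [g [Hgr [Hgf Hfg]]]]].
  assert (Hgm : forall s t, in0 b s -> in0 b t -> s <= t -> g s <= g t).
  { intros s t Hs Ht Hst. destruct (Rle_dec (g s) (g t)); auto.
    pose proof (Hm (g t) (g s) (Hgr t Ht) (Hgr s Hs) ltac:(lra)).
    rewrite !Hfg in H by auto. assert (s = t) by lra. subst. lra. }
  split; [auto|split;[auto|split]].
  - apply mono_surj_cont with b; auto. intros y Hy. exists (g y); auto.
  - exists g. split; [auto|split;[auto|split;[auto|]]].
    apply mono_surj_cont with a; auto. intros y Hy. exists (f y); auto.
Qed.

Lemma ndh_ndh' a b f : ndhomeo a b f -> ndh' a b f.
Proof. intros [Hr [Hm [_ [g [H1 [H2 [H3 _]]]]]]]. split; auto. split; auto. exists g; auto. Qed.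

Section GL.
Variables (a b : R) (f : R -> R) (Ha : 0 < a) (Hf : G a b f).

Lemma G_f0 : f 0 = 0.
Proof.
  destruct Hf as [[Hr [Hm [_ [g [H1 [H2 [H3 _]]]]]]] _].
  assert (Hb : in0 b 0). { pose proof (Hr 0 ltac:(unfold in0; lra)). unfold in0 in *; lra. }
  pose proof (H3 0 Hb). pose proof (H1 0 Hb).
  pose proof (Hm 0 (g 0) ltac:(unfold in0; lra) H0 ltac:(unfold in0 in *; lra)).
  pose proof (Hr 0 ltac:(unfold in0; lra)). unfold in0 in *. lra.
Qed.

Lemma G_fa : f a = b.
Proof.
  destruct Hf as [[Hr [Hm [_ [g [H1 [H2 [H3 _]]]]]]] _].
  assert (Hb : in0 b b). { pose proof (Hr 0 ltac:(unfold in0; lra)). unfold in0 in *; lra. }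
  pose proof (H3 b Hb). pose proof (H1 b Hb).
  pose proof (Hm (g b) a H0 ltac:(unfold in0; lra) ltac:(unfold in0 in *; lra)).
  pose proof (Hr a ltac:(unfold in0; lra)). unfold in0 in *. lra.
Qed.

Lemma G_strict s t : in0 a s -> in0 a t -> s < t -> f s < f t.
Proof.
  intros Hs Ht Hst. destruct Hf as [[Hr [Hm [_ [g [H1 [H2 [H3 _]]]]]]] _].
  pose proof (Hm s t Hs Ht ltac:(lra)). destruct (Req_dec (f s) (f t)); [|lra].
  pose proof (H2 s Hs). pose proof (H2 t Ht). rewrite H0 in H4. lra.
Qed.

Lemma G_b : 0 < b.
Proof. pose proof (G_strict 0 a ltac:(unfold in0;lra) ltac:(unfold in0;lra) Ha). rewrite G_f0, G_fa in H. lra. Qed.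

Lemma G_refl s t : in0 a s -> in0 a t -> f s <= f t -> s <= t.
Proof.
  intros Hs Ht H. destruct (Rle_dec s t); auto. pose proof (G_strict t s Ht Hs ltac:(lra)). lra.
Qed.

Lemma G_le0 x : x <= 0 -> f x = 0.
Proof. intros. destruct (Req_dec x 0). subst; apply G_f0. apply (proj1 (proj2 Hf)); lra. Qed.

Lemma G_gea x : a <= x -> f x = b.
Proof. intros. destruct (Req_dec x a). subst; apply G_fa. apply (proj2 (proj2 Hf)); lra. Qed.

Definition clamp (x : R) := Rmax 0 (Rmin a x).

Lemma clamp_in x : in0 a (clamp x).
Proof. unfold clamp, Rmax, Rmin, in0. repeat destruct Rle_dec; lra. Qed.

Lemma clamp_lip x y : Rabs (clamp x - clamp y) <= Rabs (x - y).
Proof. unfold clamp, Rmax, Rmin. unfold Rabs. repeat destruct Rle_dec; repeat destruct Rcase_abs; lra. Qed.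

Lemma G_clamp x : f x = f (clamp x).
Proof.
  unfold clamp, Rmax, Rmin. repeat destruct Rle_dec;
  first [ reflexivity | lra
        | rewrite (G_le0 x) by lra; rewrite ?G_f0, ?G_le0 by lra; reflexivity
        | rewrite (G_gea x) by lra; rewrite ?G_fa, ?G_gea by lra; reflexivity
        | rewrite (G_gea x) by lra; rewrite G_le0 by lra; lra ].
Qed.

Lemma G_unif eps : 0 < eps -> exists d, 0 < d /\ forall x y, Rabs (x - y) < d -> Rabs (f x - f y) < eps.
Proof.
  intros He.
  assert (Hc : cont_on a f) by (apply Hf).
  assert (Hp : forall x, 0 <= x <= a -> continuity_pt f x).
  { intros x Hx e He'. destruct (Hc x Hx e He') as [d [Hd Hd']].
    exists d; split; [lra|]. intros y [_ Hy]. simpl in *. unfold R_dist in *.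
    rewrite (G_clamp y). assert (clamp x = x) by (unfold clamp, Rmax, Rmin; repeat destruct Rle_dec; lra).
    apply Hd'. apply clamp_in. pose proof (clamp_lip y x). rewrite H in H0. lra. }
  destruct (Heine_cor2 Hp (mkposreal eps He)) as [[d Hd] Hd']. simpl in Hd'.
  exists d; split; auto. intros x y Hxy.
  rewrite (G_clamp x), (G_clamp y). pose proof (clamp_in x); pose proof (clamp_in y).
  apply Hd'; auto. pose proof (clamp_lip x y). lra.
Qed.

End GL.

Lemma G_inv a b f : G a b f -> exists g : R -> R,
    (forall s, in0 b s -> in0 a (g s)) /\
    (forall t, in0 a t -> g (f t) = t) /\
    (forall s, in0 b s -> f (g s) = s).
Proof. intros [[_ [_ [_ [g [H1 [H2 [H3 _]]]]]]] _]. exists g; auto. Qed.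

Lemma G_range a b f t : G a b f -> in0 a t -> in0 b (f t).
Proof. intros [[H _] _]; auto. Qed.
Lemma G_mono a b f s t : G a b f -> in0 a s -> in0 a t -> s <= t -> f s <= f t.
Proof. intros [[_ [H _]] _]; auto. Qed.

Lemma tensor_G a1 b1 a2 b2 p1 p2 : 0 < a1 -> 0 < a2 -> G a1 b1 p1 -> G a2 b2 p2 ->
  G (a1 + a2) (b1 + b2) (tensor a1 b1 p1 p2).
Proof.
  intros Ha1 Ha2 G1 G2.
  pose proof (G_b _ _ _ Ha1 G1) as Hb1. pose proof (G_b _ _ _ Ha2 G2) as Hb2.
  pose proof (G_f0 _ _ _ Ha2 G2) as H20. pose proof (G_fa _ _ _ Ha1 G1) as H1a.
  destruct (G_inv _ _ _ G1) as [g1 [g1r [g1l g1rr]]].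
  destruct (G_inv _ _ _ G2) as [g2 [g2r [g2l g2rr]]].
  unfold tensor. split; [apply ndh'_ndh; split; [|split] | split].
  - intros t Ht. destruct Rle_dec.
    + pose proof (G_range _ _ _ t G1 ltac:(unfold in0 in *; lra)). unfold in0 in *; lra.
    + pose proof (G_range _ _ _ (t - a1) G2 ltac:(unfold in0 in *; lra)). unfold in0 in *; lra.
  - intros s t Hs Ht Hst. destruct (Rle_dec s a1), (Rle_dec t a1).
    + apply (G_mono _ _ _ _ _ G1); unfold in0 in *; lra.
    + pose proof (G_range _ _ _ s G1 ltac:(unfold in0 in *; lra)).
      pose proof (G_range _ _ _ (t - a1) G2 ltac:(unfold in0 in *; lra)). unfold in0 in *; lra.
    + lra.
    + pose proof (G_mono _ _ _ (s - a1) (t - a1) G2 ltac:(unfold in0 in *; lra) ltac:(unfold in0 in *; lra) ltac:(lra)). lra.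
  - exists (tensor b1 a1 g1 g2). unfold tensor. split; [|split].
    + intros s Hs. destruct Rle_dec.
      * pose proof (g1r s ltac:(unfold in0 in *; lra)). unfold in0 in *; lra.
      * pose proof (g2r (s - b1) ltac:(unfold in0 in *; lra)). unfold in0 in *; lra.
    + intros t Ht. destruct (Rle_dec t a1).
      * pose proof (G_range _ _ _ t G1 ltac:(unfold in0 in *; lra)).
        destruct Rle_dec; [apply g1l; unfold in0 in *; lra | unfold in0 in *; lra].
      * pose proof (G_strict _ _ _ G2 0 (t - a1) ltac:(unfold in0; lra) ltac:(unfold in0 in *; lra) ltac:(lra)).
        destruct Rle_dec; [lra|].
        replace (p2 (t - a1) + b1 - b1) with (p2 (t - a1)) by ring.
        rewrite g2l by (unfold in0 in *; lra). ring.
    + intros s Hs. destruct (Rle_dec s b1).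
      * pose proof (g1r s ltac:(unfold in0 in *; lra)).
        destruct Rle_dec; [apply g1rr; unfold in0 in *; lra | unfold in0 in *; lra].
      * assert (0 < g2 (s - b1)).
        { pose proof (g2r (s - b1) ltac:(unfold in0 in *; lra)).
          destruct (Req_dec (g2 (s - b1)) 0).
          - pose proof (g2rr (s - b1) ltac:(unfold in0 in *; lra)). rewrite H0, H20 in H1. lra.
          - unfold in0 in *; lra. }
        destruct Rle_dec; [lra|].
        replace (g2 (s - b1) + a1 - a1) with (g2 (s - b1)) by ring.
        rewrite g2rr by (unfold in0 in *; lra). ring.
  - intros t Ht. destruct Rle_dec; [apply G1; lra | lra].
  - intros t Ht. destruct Rle_dec; [lra|].
    rewrite (proj2 (proj2 G2)) by lra. ring.
Qed.

Definition sf (L l1 : R) (f : R -> R) : R :=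
  epsilon (inhabits 0) (fun s => in0 L s /\ f s = l1).
Definition P1 (l1 : R) (f : R -> R) (s : R) : R -> R :=
  fun x => if Rle_dec x s then f x else l1.
Definition P2 (l1 : R) (f : R -> R) (s : R) : R -> R :=
  fun x => if Rle_dec x 0 then 0 else f (x + s) - l1.
Definition Bm (L l1 l2 : R) (f : R -> R) : R -> R :=
  tensor (L - sf L l1 f) l2 (P2 l1 f (sf L l1 f)) (P1 l1 f (sf L l1 f)).

Section Br.
Variables (L l1 l2 : R) (hL : 0 < L) (h1 : 0 < l1) (h2 : 0 < l2).

Lemma sf_spec f : G L (l1 + l2) f -> in0 L (sf L l1 f) /\ f (sf L l1 f) = l1.
Proof.
  intros Hf. unfold sf. apply epsilon_spec.
  destruct (G_inv _ _ _ Hf) as [g [gr [gl grr]]].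
  exists (g l1). split; [apply gr | apply grr]; unfold in0; lra.
Qed.

Lemma sf_uniq f s : G L (l1 + l2) f -> in0 L s -> f s = l1 -> sf L l1 f = s.
Proof.
  intros Hf Hs Hfs. destruct (sf_spec f Hf) as [H1 H2].
  destruct (G_inv _ _ _ Hf) as [g [gr [gl grr]]].
  rewrite <- (gl _ H1), <- (gl _ Hs). congruence.
Qed.

Lemma sf_bounds f : G L (l1 + l2) f -> 0 < sf L l1 f < L.
Proof.
  intros Hf. destruct (sf_spec f Hf) as [H1 H2].
  pose proof (G_f0 _ _ _ hL Hf). pose proof (G_fa _ _ _ hL Hf).
  unfold in0 in H1. split.
  - destruct (Req_dec (sf L l1 f) 0) as [E|E]; [rewrite E in H2; lra | lra].
  - destruct (Req_dec (sf L l1 f) L) as [E|E]; [rewrite E in H2; lra | lra].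
Qed.

Lemma decomp f : G L (l1 + l2) f ->
  let s := sf L l1 f in
  G s l1 (P1 l1 f s) /\ G (L - s) l2 (P2 l1 f s) /\ f = tensor s l1 (P1 l1 f s) (P2 l1 f s).
Proof.
  intros Hf s. destruct (sf_spec f Hf) as [Hs Hfs]. pose proof (sf_bounds f Hf) as Hb.
  fold s in Hs, Hfs, Hb.
  destruct (G_inv _ _ _ Hf) as [g [gr [gl grr]]].
  pose proof (G_f0 _ _ _ hL Hf) as f0. pose proof (G_fa _ _ _ hL Hf) as fL.
  assert (gl1 : g l1 = s) by (rewrite <- Hfs; apply gl; auto).
  assert (gm : forall u v, in0 (l1+l2) u -> in0 (l1+l2) v -> u <= v -> g u <= g v).
  { intros u v Hu Hv Huv. apply (G_refl _ _ _ Hf); auto. rewrite !grr; auto. }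
  split; [|split].
  - unfold P1. split; [apply ndh'_ndh; split; [|split]|split].
    + intros t Ht. destruct Rle_dec; [|unfold in0 in *; lra].
      pose proof (G_range _ _ _ t Hf ltac:(unfold in0 in *; lra)).
      pose proof (G_mono _ _ _ t s Hf ltac:(unfold in0 in *; lra) Hs ltac:(unfold in0 in *; lra)).
      unfold in0 in *; lra.
    + intros u v Hu Hv Huv. do 2 (destruct Rle_dec; [|unfold in0 in *; lra]).
      apply (G_mono _ _ _ _ _ Hf); unfold in0 in *; lra.
    + exists g. split; [|split].
      * intros y Hy. pose proof (gr y ltac:(unfold in0 in *; lra)).
        pose proof (gm y l1 ltac:(unfold in0 in *; lra) ltac:(unfold in0 in *; lra) ltac:(unfold in0 in *; lra)).
        unfold in0 in *; lra.
      * intros t Ht. destruct Rle_dec; [apply gl; unfold in0 in *; lra | unfold in0 in *; lra].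
      * intros y Hy. pose proof (gr y ltac:(unfold in0 in *; lra)).
        pose proof (gm y l1 ltac:(unfold in0 in *; lra) ltac:(unfold in0 in *; lra) ltac:(unfold in0 in *; lra)).
        destruct Rle_dec; [apply grr; unfold in0 in *; lra | lra].
    + intros t Ht. destruct Rle_dec; [apply (G_le0 _ _ _ hL Hf); lra | lra].
    + intros t Ht. destruct Rle_dec; [lra | auto].
  - unfold P2. split; [apply ndh'_ndh; split; [|split]|split].
    + intros t Ht. destruct Rle_dec; [unfold in0; lra|].
      pose proof (G_range _ _ _ (t + s) Hf ltac:(unfold in0 in *; lra)).
      pose proof (G_mono _ _ _ s (t + s) Hf Hs ltac:(unfold in0 in *; lra) ltac:(unfold in0 in *; lra)).
      unfold in0 in *; lra.
    + intros u v Hu Hv Huv. destruct (Rle_dec u 0), (Rle_dec v 0); try lra.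
      * pose proof (G_mono _ _ _ s (v + s) Hf Hs ltac:(unfold in0 in *; lra) ltac:(unfold in0 in *; lra)). lra.
      * pose proof (G_mono _ _ _ (u + s) (v + s) Hf ltac:(unfold in0 in *; lra) ltac:(unfold in0 in *; lra) ltac:(unfold in0 in *; lra)). lra.
    + exists (fun y => g (y + l1) - s). split; [|split].
      * intros y Hy. pose proof (gr (y + l1) ltac:(unfold in0 in *; lra)).
        pose proof (gm l1 (y + l1) ltac:(unfold in0 in *; lra) ltac:(unfold in0 in *; lra) ltac:(unfold in0 in *; lra)).
        unfold in0 in *; lra.
      * intros t Ht. destruct Rle_dec.
        -- assert (t = 0) by (unfold in0 in *; lra). rewrite H, Rplus_0_l, gl1. ring.
        -- replace (f (t + s) - l1 + l1) with (f (t + s)) by ring. rewrite gl by (unfold in0 in *; lra). ring.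
      * intros y Hy. destruct Rle_dec.
        -- pose proof (gm l1 (y + l1) ltac:(unfold in0 in *; lra) ltac:(unfold in0 in *; lra) ltac:(unfold in0 in *; lra)).
           assert (g (y + l1) = s) by lra.
           pose proof (grr (y + l1) ltac:(unfold in0 in *; lra)). rewrite H0, Hfs in H1. lra.
        -- replace (g (y + l1) - s + s) with (g (y + l1)) by ring. rewrite grr by (unfold in0 in *; lra). ring.
    + intros t Ht. destruct Rle_dec; [auto | lra].
    + intros t Ht. destruct Rle_dec; [lra|]. rewrite (G_gea _ _ _ hL Hf) by lra. ring.
  - apply functional_extensionality. intros x. unfold tensor, P1, P2.
    destruct (Rle_dec x s); [reflexivity|].
    destruct Rle_dec; [lra|]. replace (x - s + s) with x by ring. ring.
Qed.

Lemma Bm_G f : G L (l1 + l2) f -> G L (l2 + l1) (Bm L l1 l2 f).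
Proof.
  intros Hf. destruct (decomp f Hf) as [G1 [G2 _]]. pose proof (sf_bounds f Hf).
  unfold Bm. pose proof (tensor_G (L - sf L l1 f) l2 (sf L l1 f) l1 _ _ ltac:(lra) ltac:(lra) G2 G1).
  replace (L - sf L l1 f + sf L l1 f) with L in H0 by ring. auto.
Qed.

Lemma Bm_braid l1' l2' phi1 phi2 : 0 < l1' -> 0 < l2' -> l1' + l2' = L ->
  G l1' l1 phi1 -> G l2' l2 phi2 ->
  Bm L l1 l2 (tensor l1' l1 phi1 phi2) = tensor l2' l2 phi2 phi1.
Proof.
  intros H1 H2 HL G1 G2.
  pose proof (tensor_G _ _ _ _ _ _ H1 H2 G1 G2) as Gt. rewrite HL in Gt.
  assert (Hs : sf L l1 (tensor l1' l1 phi1 phi2) = l1').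
  { apply sf_uniq; auto. unfold in0; lra. unfold tensor. destruct Rle_dec; [|lra].
    apply (G_fa _ _ _ H1 G1). }
  unfold Bm. rewrite Hs. replace (L - l1') with l2' by lra.
  f_equal; apply functional_extensionality; intros x; unfold P1, P2, tensor.
  - destruct (Rle_dec x 0).
    + symmetry. destruct (Req_dec x 0); [subst; apply (G_f0 _ _ _ H2 G2)|].
      apply G2; lra.
    + destruct (Rle_dec (x + l1') l1'); [lra|]. replace (x + l1' - l1') with x by ring; ring.
  - destruct (Rle_dec x l1'); [reflexivity|].
    symmetry. apply G1; lra.
Qed.

Lemma Bm_formula f t : G L (l1 + l2) f -> in0 L t ->
  Bm L l1 l2 f t = f (t + sf L l1 f) + f (t + sf L l1 f - L) - l1.
Proof.
  intros Hf Ht. pose proof (sf_bounds f Hf). destruct (sf_spec f Hf) as [_ Hfs].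
  set (s := sf L l1 f) in *. unfold Bm, tensor, P1, P2. fold s.
  unfold in0 in Ht.
  destruct (Rle_dec t (L - s)).
  - rewrite (G_le0 _ _ _ hL Hf (t + s - L)) by lra.
    destruct Rle_dec.
    + assert (Et : t = 0) by lra. rewrite Et, Rplus_0_l, Hfs. ring.
    + ring.
  - destruct Rle_dec; [|lra].
    rewrite (G_gea _ _ _ hL Hf (t + s)) by lra.
    replace (t + s - L) with (t - (L - s)) by ring. ring.
Qed.
End Br.

Lemma absle x a : Rabs x <= a -> -a <= x <= a.
Proof. unfold Rabs; destruct Rcase_abs; lra. Qed.
Lemma absle' x a : -a <= x <= a -> Rabs x <= a.
Proof. unfold Rabs; destruct Rcase_abs; lra. Qed.
Lemma abslt x a : Rabs x < a -> -a < x < a.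
Proof. unfold Rabs; destruct Rcase_abs; lra. Qed.
Lemma abslt' x a : -a < x < a -> Rabs x < a.
Proof. unfold Rabs; destruct Rcase_abs; lra. Qed.

Section Cont.
Variables (L l1 l2 : R) (hL : 0 < L) (h1 : 0 < l1) (h2 : 0 < l2).

Lemma sf_close f eta : G L (l1 + l2) f -> 0 < eta -> exists d, 0 < d /\
  forall g, G L (l1 + l2) g -> (forall t, in0 L t -> Rabs (g t - f t) <= d) ->
  Rabs (sf L l1 g - sf L l1 f) < eta.
Proof.
  intros Hf He. pose proof (sf_bounds L l1 l2 hL h1 h2 f Hf) as Hb.
  destruct (sf_spec L l1 l2 h1 h2 f Hf) as [Hs Hfs].
  set (s := sf L l1 f) in *.
  set (p := Rmin L (s + eta)). set (q := Rmax 0 (s - eta)).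
  assert (Hp : s < p /\ in0 L p /\ p <= s + eta) by (unfold p, Rmin, in0; destruct Rle_dec; lra).
  assert (Hq : q < s /\ in0 L q /\ s - eta <= q) by (unfold q, Rmax, in0; destruct Rle_dec; lra).
  pose proof (G_strict _ _ _ Hf s p Hs (proj1 (proj2 Hp)) (proj1 Hp)).
  pose proof (G_strict _ _ _ Hf q s (proj1 (proj2 Hq)) Hs (proj1 Hq)).
  exists (Rmin (l1 - f q) (f p - l1) / 2). split.
  { apply Rmin_case; lra. }
  intros g Hg Hd. pose proof (Rmin_l (l1 - f q) (f p - l1)). pose proof (Rmin_r (l1 - f q) (f p - l1)).
  destruct (sf_spec L l1 l2 h1 h2 g Hg) as [Hsg Hgs].
  pose proof (absle _ _ (Hd p (proj1 (proj2 Hp)))). pose proof (absle _ _ (Hd q (proj1 (proj2 Hq)))).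
  apply abslt'. split.
  - destruct (Rlt_dec q (sf L l1 g)); [lra|].
    pose proof (G_mono _ _ _ _ _ Hg Hsg (proj1 (proj2 Hq)) ltac:(lra)). lra.
  - destruct (Rlt_dec (sf L l1 g) p); [lra|].
    pose proof (G_mono _ _ _ _ _ Hg (proj1 (proj2 Hp)) Hsg ltac:(lra)). lra.
Qed.

Lemma Bm_cont : sup_continuous L (l1 + l2) (Bm L l1 l2).
Proof.
  intros f Hf eps He.
  destruct (G_unif _ _ _ hL Hf (eps/4) ltac:(lra)) as [eta [Heta Hu]].
  destruct (sf_close f eta Hf Heta) as [d0 [Hd0 Hc]].
  exists (Rmin d0 (eps/4)). split. { apply Rmin_case; lra. }
  intros g Hg Hd t Ht.
  pose proof (Rmin_l d0 (eps/4)). pose proof (Rmin_r d0 (eps/4)).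
  assert (Hall : forall x, Rabs (g x - f x) <= Rmin d0 (eps/4)).
  { intros x. rewrite (G_clamp _ _ _ hL Hg x), (G_clamp _ _ _ hL Hf x). apply Hd. apply clamp_in; lra. }
  pose proof (Hc g Hg (fun t Ht => Rle_trans _ _ _ (Hd t Ht) H)) as Hs.
  rewrite (Bm_formula L l1 l2 hL h1 h2 g t Hg Ht), (Bm_formula L l1 l2 hL h1 h2 f t Hf Ht).
  set (sg := sf L l1 g) in *. set (s := sf L l1 f) in *.
  pose proof (absle _ _ (Hall (t + sg))). pose proof (absle _ _ (Hall (t + sg - L))).
  pose proof (abslt _ _ (Hu (t + sg) (t + s) ltac:(replace (t + sg - (t + s)) with (sg - s) by ring; auto))).
  pose proof (abslt _ _ (Hu (t + sg - L) (t + s - L) ltac:(replace (t + sg - L - (t + s - L)) with (sg - s) by ring; auto))).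
  apply absle'. lra.
Qed.
End Cont.

Lemma CB L l1 l2 (hL : 0 < L) (h1 : 0 < l1) (h2 : 0 < l2) f :
  G L (l1 + l2) f -> Bm L l2 l1 (Bm L l1 l2 f) = f.
Proof.
  intros Hf. destruct (decomp L l1 l2 hL h1 h2 f Hf) as [G1 [G2 E]].
  pose proof (sf_bounds L l1 l2 hL h1 h2 f Hf).
  unfold Bm at 2. rewrite (Bm_braid L l2 l1 hL h2 h1 (L - sf L l1 f) (sf L l1 f)); auto; try lra.
Qed.

Theorem proposition4p8 (L l1 l2 : R) (hL : 0 < L) (h1 : 0 < l1) (h2 : 0 < l2) :
  exists B : (R -> R) -> (R -> R),
    braid_prop L l1 l2 B /\
    (forall B' : (R -> R) -> (R -> R), braid_prop L l1 l2 B' ->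
       forall f, G L (l1 + l2) f -> B' f = B f) /\
    (* B is a homeomorphism of the space G(L, l1 + l2) = G(L, l2 + l1) *)
    sup_continuous L (l1 + l2) B /\
    exists C : (R -> R) -> (R -> R),
      (forall f, G L (l2 + l1) f -> G L (l1 + l2) (C f)) /\
      (forall f, G L (l1 + l2) f -> C (B f) = f) /\
      (forall f, G L (l2 + l1) f -> B (C f) = f) /\
      sup_continuous L (l2 + l1) C.
Proof.
  exists (Bm L l1 l2). split; [|split; [|split]].
  - split. apply Bm_G; auto. intros. apply Bm_braid; auto.
  - intros B' [_ HB'] f Hf. destruct (decomp L l1 l2 hL h1 h2 f Hf) as [G1 [G2 E]].
    pose proof (sf_bounds L l1 l2 hL h1 h2 f Hf).
    rewrite E at 1. rewrite (HB' (sf L l1 f) (L - sf L l1 f)); auto; try lra.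
  - apply Bm_cont; auto.
  - exists (Bm L l2 l1). split; [|split; [|split]].
    + intros f Hf. apply Bm_G; auto.
    + intros f Hf. apply CB; auto.
    + intros f Hf. apply CB; auto.
    + apply Bm_cont; auto.
Qed.
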